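(* In the standing construction, let $\lambda_2=2/n$. Every weakly reduced diagram over $\langle\mathfrak A\mid\mathcal R\rangle$, equipped with its special selection, satisfies the condition $\mathcal B(\lambda_1,\lambda_2)$.
   Context: Standing construction: Fix an integer $n\ge 63$ and a real number $\lambda_1$ with $0<\lambda_1<1$ and $\bigl(4+\frac{2n\lambda_1}{1-\lambda_1}\bigr)\lambda_1\le\frac1n$. Let $\mathfrak A=\{x_1,\dots,x_n\}$. A group word over $\mathfrak A$ (a word in the letters $x_i^{\pm1}$) is called regular if it has the form $x_1^{k_1}x_2^{k_2}\cdots x_n^{k_n}$ with $k_i\in\mathbb Z$; $|w|$ denotes word length. Fix a total order on the set of reduced group words over $\mathfrak A$ which is order-isomorphic to $\mathbb N$. Define sets $\mathcal R_0\subseteq\mathcal R_1\subseteq\cdots$ inductively: $\mathcal R_0=\emptyset$; for $i>0$, if every group word over $\mathfrak A$ is equal to some regular word in the group $\langle\mathfrak A\mid\mathcal R_{i-1}\rangle$, put $\mathcal R_i=\mathcal R_{i-1}$ (and $w_i,m_i,r_i$ are undefined); otherwise let $w_i$ be the least (in the fixed order) reduced group word that does not start with $x_1^{\pm1}$, does not end with $x_n^{\pm1}$, and is not equal in $\langle\mathfrak A\mid\mathcal R_{i-1}\rangle$ to any regular word; choose a positive integer $m_i$ such that (a) $m_i\ne m_j$ for every $j<i$ for which $m_j$ is defined, (b) $nm_i+|w_i|\ge nm_j+|w_j|$ for every such $j<i$, (c) $\lambda_1(nm_i+|w_i|)\ge|w_i|$; set $r_i=x_1^{m_i}x_2^{m_i}\cdots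 x_n^{m_i}w_i^{-1}$ and $\mathcal R_i=\mathcal R_{i-1}\cup\{r_i\}$. Let $\mathcal R=\bigcup_{i\ge0}\mathcal R_i$, let $G=\langle\mathfrak A\mid\mathcal R\rangle$, and let $a_i\in G$ be the image of $x_i$. The statement is asserted for every choice of the order and of the $m_i$ satisfying (a)–(c). Diagrams: a map is a connected subcomplex of an oriented combinatorial 2-sphere together with a set of cycles (its contours) such that each oriented edge lies in the boundary cycle of a face or in a contour; a diagram over $\langle\mathfrak A\mid\mathcal R\rangle$ is a map whose oriented edges are labelled by letters of $\mathfrak A^{\pm1}$ (mutually inverse oriented edges get inverse labels) so that the contour $\partial\Pi$ of each face $\Pi$ (oriented counterclockwise) has a representative cyclic path labelled by an element of $\mathcal R^{\pm1}$; $|\partial\Pi|$ is its length. A pair of distinct faces $\{\Pi_1,\Pi_2\}$ is immediately cancellable if there are paths $p_1,p_2$ with a nontrivial common initial subpath, $\langle p_1\rangle=\partial\Pi_1$, $\langle p_2^{-1}\rangle=\partial\Pi_2$ and equal labels; a diagram is weakly reduced if it has no such pair. A selection on a diagram is a set of nontrivial reduced subpaths of contours of faces closed under taking nontrivial subpaths; paths in it are selected; a path $p$ is double-selected if $p$ and $p^{-1}$ are both selected. The special selection: for each face $\Pi$, write $\partial\Pi=\langle st\rangle$ where $\ell(s)=x_1^{m}x_2^{m}\cdots x_n^{m}$ or $x_n^{-m}\cdots x_1^{-m}$ for some $m\in\mathbb N$ and $|s|>\frac{n}{2n-2}|\partial\Pi|$ (this $s$ is the part of $r_j^{\pm1}$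 corresponding to $x_1^{m_j}\cdots x_n^{m_j}$); the selected subpaths of $\partial\Pi$ are exactly the nontrivial subpaths of $s$. An oriented arc is a simple path all of whose intermediate vertices have degree $2$; an arc is a pair of mutually inverse oriented arcs; an arc is double-selected if both its oriented arcs are selected, and is incident to $\Pi$ if one of its oriented arcs is a subpath of $\partial\Pi$. For $\lambda_1,\lambda_2\in[0,1]$, a diagram with selection satisfies $\mathcal B(\lambda_1,\lambda_2)$ if for each face $\Pi$: ($\mathcal B_0$) $\partial\Pi$ has at least one selected subpath and at most one maximal selected subpath; ($\mathcal B_1$) some selected subpath of $\partial\Pi$ has length $\ge(1-\lambda_1)|\partial\Pi|$; ($\mathcal B_2$) every double-selected arc incident to $\Pi$ has length $\le\lambda_2|\partial\Pi|$. *)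

(* Defs.v *)
From HB Require Import structures.
From mathcomp Require Import all_boot all_order all_algebra.
From mathcomp Require Import reals.
From Stdlib Require Import Relations.
Unset Printing Implicit Defensive.
Import Order.TTheory GRing.Theory Num.Theory.
Local Open Scope ring_scope.

(* The letter (i, false) is x_{i+1}, the letter (i, true) is x_{i+1}^-1 *)
Definition letter (n : nat) := ('I_n * bool)%type.
Definition word (n : nat) := seq (letter n).

Definition linv {n} (x : letter n) : letter n := (x.1, ~~ x.2).
Definition winv {n} (w : word n) : word n := rev (map linv w).

Definition reduced_word {n} (w : word n) : bool :=
  all (fun p => p.2 != linv p.1) (zip w (behead w)).

(* regular word x_1^{k_1} ... x_n^{k_n}, k_i in Z (|k_i| = k i, sign = s i) *)
Definition regular {n} (w : word n) : Prop :=
  exists (k : 'I_n -> nat) (s : 'I_n -> bool),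
    w = flatten [seq nseq (k i) (i, s i) | i <- enum 'I_n].

Definition block (n m : nat) : word n :=
  flatten [seq nseq m (i, false) | i <- enum 'I_n].

Definition relator {n} (m : nat) (w : word n) : word n := block n m ++ winv w.

(* Equality in the group <A | Rel>: the congruence on words generated by
   inserting/deleting r^{+-1} (r in Rel) or a trivial relator x x^-1. *)
Definition gstep {n} (Rel : word n -> Prop) (u v : word n) : Prop :=
  exists a b r, (Rel r \/ Rel (winv r) \/ exists x, r = [:: x; linv x]) /\
                u = a ++ b /\ v = a ++ r ++ b.
Definition geq {n} (Rel : word n -> Prop) : relation (word n) :=
  clos_refl_sym_trans (word n) (gstep Rel).
Definition eq_regular {n} (Rel : word n -> Prop) (u : word n) : Prop :=
  exists v, regular v /\ geq Rel u v.

(* the fixed total order on reduced words order-isomorphic to N, given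
   by its order isomorphism e : N -> reduced words (u < v iff index < index) *)
Definition word_order_enum {n} (e : nat -> word n) : Prop :=
  injective e /\ (forall k, reduced_word (e k)) /\
  (forall w, reduced_word w -> exists k, e k = w).

(* C i = Some (w_i, m_i) when w_i, m_i, r_i are defined, None otherwise *)
Definition Rprefix {n} (C : nat -> option (word n * nat)) (i : nat) (r : word n) : Prop :=
  exists j w m, (j < i)%N /\ C j = Some (w, m) /\ r = relator m w.
Definition Rall {n} (C : nat -> option (word n * nat)) (r : word n) : Prop :=
  exists j w m, C j = Some (w, m) /\ r = relator m w.

Definition not_start_x1 {n} (w : word n) : bool :=
  if w is x :: _ then (nat_of_ord x.1 != 0)%N else true.
Definition not_end_xn {n} (w : word n) : bool :=
  if rev w is x :: _ then (nat_of_ord x.1 != n.-1)%N else true.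

Definition candidate {n} (Rel : word n -> Prop) (w : word n) : Prop :=
  not_start_x1 w /\ not_end_xn w /\ ~ eq_regular Rel w.

Definition construction {R : realType} {n : nat} (lam1 : R)
    (e : nat -> word n) (C : nat -> option (word n * nat)) : Prop :=
  C 0%N = None /\
  forall i, (0 < i)%N ->
    ((forall u : word n, eq_regular (Rprefix C i) u) -> C i = None) /\
    (~ (forall u : word n, eq_regular (Rprefix C i) u) ->
      exists w m, C i = Some (w, m) /\
        (exists k, e k = w /\ candidate (Rprefix C i) w /\
           forall k', (k' < k)%N -> ~ candidate (Rprefix C i) (e k')) /\
        (0 < m)%N /\
        (forall j w' m', (j < i)%N -> C j = Some (w', m') ->
            m != m' /\ (n * m' + size w' <= n * m + size w)%N) /\
        (size w)%:R <= lam1 * (n * m + size w)%N%:R).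

(* darts = oriented edges; drev = inverse oriented edge; dnext d = the *)
(* oriented edge following d on the boundary cycle (face contour, read *)
(* counterclockwise, or map contour) containing d; dface marks darts   *)
(* lying on boundaries of faces (the other dnext-cycles are contours). *)
Record dmap (n : nat) := DMap {
  dart : finType;
  drev : dart -> dart;
  dnext : dart -> dart;
  dface : pred dart;
  dlab : dart -> letter n }.
Arguments dart {n} d.
Arguments drev {n} d _.
Arguments dnext {n} d _.
Arguments dface {n} d _.
Arguments dlab {n} d _.

(* permutation of the darts with a common tail vertex *)
Definition dsigma {n} (M : dmap n) (d : dart M) : dart M := dnext M (drev M d).

(* vertices are dsigma-orbits; tail of d = orbit of d, head of d = tail of drev d *)
Definition is_map {n} (M : dmap n) : Prop :=
  involutive (drev M) /\ (forall d, drev M d != d) /\ injective (dnext M) /\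
  (forall d, dface M (dnext M d) = dface M d) /\
  (forall d e, connect [rel x y | (y == drev M x) || (y == dnext M x)] d e) /\
  (* genus 0 (a subcomplex of the 2-sphere): V - E + (#faces + #contours) = 2 *)
  (2 * fcard (dsigma M) predT + 2 * fcard (dnext M) predT = #|dart M| + 4)%N.

Definition blen {n} (M : dmap n) (d : dart M) : nat := fingraph.order (dnext M) d.

Definition bword {n} (M : dmap n) (d : dart M) : word n :=
  map (dlab M) (traject (dnext M) d (blen M d)).

Definition is_diagram {n} (Rel : word n -> Prop) (M : dmap n) : Prop :=
  is_map M /\
  (forall d, dlab M (drev M d) = linv (dlab M d)) /\
  (forall d, dface M d ->
     exists r j, (Rel r \/ Rel (winv r)) /\ rot j (bword M d) = r).

(* Weakly reduced: no immediately cancellable pair of faces.  The pair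
   {Pi1, Pi2} (Pi1 through d, Pi2 through drev d) is immediately cancellable
   iff p1 = (d, dnext d, ...) once around dPi1 and p2 = (d, psi d, psi^2 d, ...)
   with p2^-1 once around dPi2 have equal labels, psi = drev o dnext^-1 o drev. *)
Definition weakly_reduced {n} (M : dmap n) : Prop :=
  ~ exists d : dart M,
      [/\ dface M d, dface M (drev M d), ~~ fconnect (dnext M) d (drev M d),
          blen M d = blen M (drev M d) &
          forall j, (j < blen M d)%N ->
            dlab M (iter j (dnext M) d) =
            dlab M (iter j (fun x => drev M (finv (dnext M) (drev M x))) d)].

Definition is_dpath {n} (M : dmap n) (p : seq (dart M)) : bool :=
  if p is x :: p' then path [rel a b | fconnect (dsigma M) (drev M a) b] x p'
  else true.

Definition pinv {n} (M : dmap n) (p : seq (dart M)) : seq (dart M) :=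
  rev (map (drev M) p).

(* oriented arc: nontrivial simple path (no vertex visited twice) all of
   whose intermediate vertices have degree 2 *)
Definition oriented_arc {n} (M : dmap n) (p : seq (dart M)) : bool :=
  if p is x :: p' then
    [&& is_dpath M p,
        pairwise (fun a b => ~~ fconnect (dsigma M) a b)
                 (rcons p (drev M (last x p'))) &
        all (fun d => fingraph.order (dsigma M) d == 2)%N p']
  else false.

(* nontrivial subpath of the contour of the face/contour through d *)
Definition bsub {n} (M : dmap n) (d : dart M) (p : seq (dart M)) : Prop :=
  exists e l, fconnect (dnext M) d e /\ (0 < l <= blen M d)%N /\
              p = traject (dnext M) e l.

(* the special selection: d starts a subpath s of the face contour of length k
   with label x_1^m..x_n^m or x_n^-m..x_1^-m and |s| > n/(2n-2) |dPi| *)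
Definition special_block {n} (M : dmap n) (d : dart M) (k : nat) : Prop :=
  (k <= blen M d)%N /\ ((2 * n - 2) * k > n * blen M d)%N /\
  exists m, map (dlab M) (traject (dnext M) d k) = block n m \/
            map (dlab M) (traject (dnext M) d k) = winv (block n m).

Definition selected {n} (M : dmap n) (p : seq (dart M)) : Prop :=
  exists d k a l, dface M d /\ special_block M d k /\ (0 < l)%N /\
                  (a + l <= k)%N /\ p = traject (dnext M) (iter a (dnext M) d) l.

Definition max_selected {n} (M : dmap n) (d : dart M) (p : seq (dart M)) : Prop :=
  selected M p /\ bsub M d p /\
  forall q, selected M q -> bsub M d q -> infix p q -> p = q.

Definition condB {R : realType} {n} (M : dmap n) (lam1 lam2 : R) : Prop :=
  forall d, dface M d ->
    ((exists p, selected M p /\ bsub M d p) /\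
     (forall p q, max_selected M d p -> max_selected M d q -> p = q)) /\
    (exists p, selected M p /\ bsub M d p /\
               (1 - lam1) * (blen M d)%:R <= (size p)%:R) /\
    (forall p, oriented_arc M p -> selected M p -> selected M (pinv M p) ->
       (bsub M d p \/ bsub M d (pinv M p)) ->
       (size p)%:R <= lam2 * (blen M d)%:R).

(* Main.v *)
Require Import Defs.
From HB Require Import structures.
From mathcomp Require Import all_boot all_order all_algebra.
From mathcomp Require Import reals.
From mathcomp Require Import zify ring lra.
From Stdlib Require Import Classical.
Import Order.TTheory GRing.Theory Num.Theory.
Set Implicit Arguments. Unset Strict Implicit. Unset Printing Implicit Defensive.

Lemma nth_flatten_nseq (T I : Type) (x0 : T) (i0 : I) (g : I -> T) m (s : seq I) y :
  y < m * size s ->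
  nth x0 (flatten [seq nseq m (g i) | i <- s]) y = g (nth i0 s (y %/ m)).
Proof.
elim: s y => [|a s IH] y /=; first by rewrite muln0.
rewrite mulnS => Hy; rewrite nth_cat size_nseq.
case: ltnP => Hym.
  by rewrite nth_nseq Hym divn_small.
have m0 : 0 < m by case: (posnP m) Hy => [->|//]; rewrite mul0n.
rewrite IH; last by rewrite -(ltn_add2l m) subnKC.
have -> : y %/ m = ((y - m) %/ m).+1.
  by rewrite -{1}(subnKC Hym) -[X in (X + _) %/ _]mul1n divnMDl.
by [].
Qed.

Lemma size_block n m : size (block n m) = n * m.
Proof.
rewrite /block size_flatten /shape -map_comp.
have -> : [seq (size \o (fun i : 'I_n => nseq m (i, false))) i | i <- enum 'I_n] = nseq n m.
  apply: (@eq_from_nth _ 0); rewrite size_map ?size_nseq size_enum_ord //.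
  move=> i Hi; rewrite nth_nseq Hi.
  have n0 : 0 < n by case: n Hi.
  by rewrite (nth_map (Ordinal n0)) ?size_enum_ord //= size_nseq.
elim: n => //= k IH; by rewrite IH mulSn.
Qed.

Lemma nth_block n m (x0 : letter n) y : y < n * m ->
  (nth x0 (block n m) y).1 = y %/ m :> nat /\ (nth x0 (block n m) y).2 = false.
Proof.
move=> Hy.
have n0 : 0 < n by case: n x0 Hy => // [[[]]].
rewrite /block (nth_flatten_nseq x0 (Ordinal n0) (fun i : 'I_n => (i, false))) /=.
  split => //; rewrite nth_enum_ord //.
  have m0 : 0 < m by case: m Hy; rewrite ?muln0.
  by rewrite ltn_divLR // mulnC.
by rewrite size_enum_ord mulnC.
Qed.

Lemma div_rev n m y : y < n * m -> (n * m - y.+1) %/ m = n.-1 - y %/ m.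
Proof.
move=> Hy.
have m0 : 0 < m by case: (posnP m) Hy => [->|//]; rewrite muln0.
have Hq : y %/ m < n by rewrite ltn_divLR.
have Hr := ltn_pmod y m0.
case: n Hy Hq => // k Hy Hq /=.
have E : k.+1 * m - y.+1 = (k - y %/ m) * m + (m - (y %% m).+1).
  rewrite {1}(divn_eq y m) mulnBl mulSn.
  have : (y %/ m) * m <= k * m by rewrite leq_mul2r; apply/orP; right; lia.
  move: Hr; set q := y %/ m; set r := y %% m; set a := k * m; set b := q * m; lia.
have Hs : m - (y %% m).+1 < m by move: m0; set r := y %% m; lia.
by rewrite E divnMDl // (divn_small Hs) addn0.
Qed.

Lemma nth_winv_block n m (x0 : letter n) y : y < n * m ->
  (nth x0 (winv (block n m)) y).1 = n.-1 - y %/ m :> nat /\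
  (nth x0 (winv (block n m)) y).2 = true.
Proof.
move=> Hy; rewrite /winv nth_rev size_map size_block //.
have Hy' : n * m - y.+1 < n * m by move: Hy; set a := n * m; lia.
rewrite (nth_map x0) ?size_block //.
have [H1 H2] := nth_block x0 Hy'.
by rewrite /linv /= H2 H1 div_rev.
Qed.

Lemma div_eq_iff (x m i : nat) : 0 < m -> (x %/ m == i) = (i * m <= x < i.+1 * m).
Proof.
move=> m0; rewrite eqn_leq leq_divRL // -ltnS ltn_divLR // andbC; reflexivity.
Qed.

Lemma mod_pred X N s : (X.+1) %% N = s.+1 -> X %% N = s.
Proof. by rewrite modnS; case: ifP => // _ [->]. Qed.

Lemma mod_succ X N s : X %% N = s -> s.+1 < N -> (X.+1) %% N = s.+1.
Proof. by move=> H Hs; rewrite -addn1 -modnDml H addn1 modn_small. Qed.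

Section Core.
Variables (n m K : nat) (c : nat -> letter n).
Hypothesis m0 : 0 < m.
Hypothesis n3 : 3 <= n.
Let N := n * m + K.
Hypothesis cper : forall u, c (u + N) = c u.
Hypothesis cblk : forall u, u < n * m -> (c u).1 = u %/ m :> nat /\ (c u).2 = false.

Lemma cmod u : c u = c (u %% N).
Proof.
rewrite {1}(divn_eq u N); elim: (u %/ N) => [|q IH]; first by rewrite mul0n add0n.
by rewrite mulSn -addnA addnC cper.
Qed.

Lemma nm0 : 0 < n * m. Proof. by rewrite muln_gt0 m0 andbT; case: n n3. Qed.

Lemma findpos t a : K < a -> exists2 v, v < a & (t + v) %% N < n * m.
Proof.
move=> Ha; case: (ltnP (t %% N) (n * m)) => Hz.
  by exists 0; [lia | rewrite addn0].
have HN : t %% N < N by rewrite ltn_pmod // /N; have := nm0; lia.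
exists (N - t %% N).
  by move: Hz HN; rewrite /N; set z := t %% N; lia.
have -> : t + (N - t %% N) = (t %/ N).+1 * N.
  by rewrite {1}(divn_eq t N) mulSn -addnA subnKC 1?addnC // ltnW.
by rewrite modnMl nm0.
Qed.

Lemma coreB t a : K < a -> (forall v, v < a -> (c (t + v)).2 = true) -> False.
Proof.
move=> Ha Hv; have [v Hva Hp] := findpos t Ha.
have := Hv v Hva; rewrite cmod; have [_ ->] := cblk Hp; done.
Qed.

Lemma idx_at x i : x < n * m -> ((c x).1 == i :> nat) = (i * m <= x < i * m + m).
Proof. by move=> Hx; have [-> _] := cblk Hx; rewrite div_eq_iff // mulSnr. Qed.

Lemma coreA t a i : 0 < i -> i.+1 < n -> K < a ->
  (c t).1 != i :> nat -> (c (t.+1 + a)).1 != i :> nat ->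
  (forall v, v < a -> (c (t.+1 + v)).1 = i :> nat /\ (c (t.+1 + v)).2 = false) ->
  a = m /\ t.+1 %% N = i * m.
Proof.
move=> i0 iN Ha Ht Hta Hv.
have [v0 Hv0 Hq0] := findpos t.+1 Ha.
have HimN : i * m + m < n * m by rewrite -mulSnr ltn_mul2r m0.
have HNN : n * m <= N by rewrite /N leq_addr.
have im1 : m <= i * m by rewrite leq_pmull.
have Hq0r : i * m <= (t.+1 + v0) %% N < i * m + m.
  have [H1 _] := Hv v0 Hv0; move/eqP: H1; rewrite cmod idx_at //.
have Hv' : forall v, v < a -> forall q, (t.+1 + v) %% N = q -> q < n * m ->
     i * m <= q < i * m + m.
  move=> v Hva q Hq Hqn; have [H1 _] := Hv v Hva; move/eqP: H1; rewrite cmod Hq idx_at //.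
have Ht' : forall q, t %% N = q -> q < n * m -> ~~ (i * m <= q < i * m + m).
  by move=> q Hq Hqn; move: Ht; rewrite cmod Hq idx_at.
have Hta' : forall q, (t.+1 + a) %% N = q -> q < n * m -> ~~ (i * m <= q < i * m + m).
  by move=> q Hq Hqn; move: Hta; rewrite cmod Hq idx_at.
clear Ht Hta Hv Hq0.
move: Hq0r Hv' Ht' Hta' HimN HNN im1.
move Eq0 : ((t.+1 + v0) %% N) => q0.
set im := i * m; clearbody im.
set nm := n * m; clearbody nm.
move=> /andP[Hq0a Hq0b] Hv Ht Hta HimN HNN im1.
have Fw : forall d, v0 + d < a -> (t.+1 + v0 + d) %% N = q0 + d /\ q0 + d < im + m.
  elim=> [|d IH] Hd; first by rewrite !addn0 Eq0.
  have [IH1 IH2] : (t.+1 + v0 + d) %% N = q0 + d /\ q0 + d < im + m.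
    by apply: IH; clear -Hd; lia.
  have E : (t.+1 + v0 + d.+1) %% N = q0 + d.+1.
    rewrite addnS addnS; apply: mod_succ IH1 _; clear -IH2 HimN HNN; lia.
  split => //.
  have := Hv (v0 + d.+1) Hd (q0 + d.+1); rewrite addnA => /(_ E).
  by case/(_ _)/andP => //; clear -IH2 HimN; lia.
have Hend : q0 + (a - v0) = im + m.
  have Hav : v0 + (a - v0).-1 < a by clear -Hv0; lia.
  have [F1 F2] := Fw _ Hav.
  have E : (t.+1 + a) %% N = q0 + (a - v0).
    have -> : t.+1 + a = (t.+1 + v0 + (a - v0).-1).+1 by clear -Hv0; lia.
    have -> : q0 + (a - v0) = (q0 + (a - v0).-1).+1 by clear -Hv0; lia.
    apply: mod_succ F1 _; clear -F2 HimN HNN; lia.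
  have := Hta _ E; clear -F2 HimN Hq0a Hv0; move=> H.
  have : q0 + (a - v0) < nm by lia.
  move/H; rewrite negb_and -!ltnNge; lia.
have Bw : forall d, d <= v0 -> (t.+1 + (v0 - d)) %% N = q0 - d /\ im <= q0 - d.
  elim=> [|d IH] Hd; first by rewrite !subn0 Eq0.
  have [IH1 IH2] : (t.+1 + (v0 - d)) %% N = q0 - d /\ im <= q0 - d.
    by apply: IH; clear -Hd; lia.
  have E : (t.+1 + (v0 - d.+1)) %% N = q0 - d.+1.
    apply: mod_pred; rewrite -addnS subnSK // IH1; clear -IH2 im1 i0 m0; lia.
  split => //.
  have Hlt : v0 - d.+1 < a by clear -Hv0; lia.
  have := Hv _ Hlt _ E.
  by case/(_ _)/andP => //; clear -Hq0b HimN; lia.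
have [B1 B2] := Bw v0 (leqnn _); rewrite subnn addn0 in B1.
have Hstart : q0 - v0 = im.
  have E : t %% N = (q0 - v0).-1 by apply: mod_pred; rewrite B1; clear -B2 im1 m0; lia.
  have := Ht _ E; clear -B2 Hq0b HimN im1 m0; move=> H.
  have : (q0 - v0).-1 < nm by lia.
  move/H; rewrite negb_and -!ltnNge; lia.
split; [clear -Hend Hstart Hv0 Hq0b im1 m0; lia | by rewrite B1].
Qed.

End Core.

Lemma align m1 m2 A1 A2 l : 0 < m1 -> 0 < m2 -> 2 * m1 < l ->
  (forall u, u < l -> (A1 + u) %/ m1 = (A2 + u) %/ m2) -> m1 = m2 /\ A1 = A2.
Proof.
move=> m10 m20 Hl H.
have D : forall u j, u < l -> j * m1 <= A1 + u < j * m1 + m1 ->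
    j * m2 <= A2 + u < j * m2 + m2.
  move=> u j Hu Hr.
  have : (A1 + u) %/ m1 == j by rewrite (div_eq_iff _ _ m10) mulSnr.
  rewrite H //; move/eqP=> <-; rewrite leq_trunc_div -mulSnr ltn_ceil //.
have HA : (A1 %/ m1) * m1 <= A1 < (A1 %/ m1) * m1 + m1.
  by rewrite -mulSnr -div_eq_iff.
move: D HA; set k := A1 %/ m1 => D /andP[HA1 HA2].
have D0 := D (k * m1 + m1 - A1.+1) k.
have D1 := D (k * m1 + m1 - A1.+1).+1 k.+1.
have D2 := D (k * m1 + m1 - A1.+1 + m1) k.+1.
have D3 := D (k * m1 + m1 - A1.+1 + m1).+1 k.+2.
move: D0 D1 D2 D3; rewrite !mulSnr.
set km1 := k * m1; set km2 := k * m2.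
move=> D0 D1 D2 D3.
have /andP[E0 E0'] := D0 ltac:(lia) ltac:(lia).
have /andP[E1 E1'] := D1 ltac:(lia) ltac:(lia).
have /andP[E2 E2'] := D2 ltac:(lia) ltac:(lia).
have /andP[E3 E3'] := D3 ltac:(lia) ltac:(lia).
have Em : m1 = m2 by lia.
rewrite /km2 -Em -/km1 in E0 E0' E1 E1'.
split => //; lia.
Qed.


Lemma winvK n : involutive (@winv n).
Proof.
move=> w; rewrite /winv map_rev revK -map_comp map_id_in // => x _ /=.
by case: x => a b; rewrite /linv /= negbK.
Qed.

Lemma winv_cat n (a b : word n) : winv (a ++ b) = winv b ++ winv a.
Proof. by rewrite /winv map_cat rev_cat. Qed.

Lemma size_winv n (w : word n) : size (winv w) = size w.
Proof. by rewrite /winv size_rev size_map. Qed.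

Lemma linvK n : involutive (@linv n).
Proof. by case=> a b; rewrite /linv /= negbK. Qed.

Lemma nth_rot_mod T (x0 : T) (s : seq T) k i : k <= size s -> i < size s ->
  nth x0 (rot k s) i = nth x0 s ((i + k) %% size s).
Proof.
move=> Hk Hi; rewrite /rot nth_cat size_drop.
case: ltnP => H.
  have E : i + k < size s by move: H Hk Hi; set S := size s; lia.
  by rewrite nth_drop (modn_small E) addnC.
have E1 : i - (size s - k) < k by move: H Hk Hi; set S := size s; lia.
rewrite nth_take //.
have E2 : i + k = (i - (size s - k)) + size s by move: H Hk Hi; set S := size s; lia.
have E3 : i - (size s - k) < size s by move: H Hk Hi; set S := size s; lia.
by rewrite E2 modnDr modn_small.
Qed.

Lemma mod_lt2 x N : x < N + N -> x %% N = if x < N then x else x - N.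
Proof.
move=> H; case: ltnP => H2; first by rewrite modn_small.
have E : x - N < N by lia.
have {1}-> : x = (x - N) + N by lia.
by rewrite modnDr modn_small.
Qed.
Lemma CI n (x0 : letter n) (s1 : word n) K X Y :
  K <= size s1 -> Y < size s1 + size s1 -> X + K + Y + 1 = size s1 + size s1 ->
  nth x0 (rot K (winv s1)) (X %% size s1) = linv (nth x0 s1 (Y %% size s1)).
Proof.
move=> HK HY HXY; set N := size s1 in HK HY HXY *.
have N0 : 0 < N by clear -HXY; lia.
have Hs : size (winv s1) = N by rewrite size_winv.
rewrite nth_rot_mod ?Hs ?ltn_pmod // modnDml.
have E : (X + K) %% N = N - (Y %% N).+1.
  rewrite (mod_lt2 HY) mod_lt2; last by clear -HXY; lia.
  by case: ifP; case: ifP; clear -HXY; lia.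
have Hy : Y %% N < N by rewrite ltn_pmod.
rewrite E /winv nth_rev size_map -/N; last by clear -Hy; lia.
rewrite (nth_map x0); last by rewrite -/N; clear -Hy; lia.
by congr (linv (nth _ _ _)); clear -Hy; lia.
Qed.

Section Diag.
Variables (n : nat) (M : dmap n).
Hypothesis Hrev : involutive (drev M).
Hypothesis Hinj : injective (dnext M).
Hypothesis Hlab : forall d, dlab M (drev M d) = linv (dlab M d).

Definition lab (x : dart M) u := dlab M (iter u (dnext M) x).

Lemma labD x t u : lab (iter t (dnext M) x) u = lab x (t + u).
Proof. by rewrite /lab -iterD addnC. Qed.

Lemma blen_iter x t : blen M (iter t (dnext M) x) = blen M x.
Proof.
elim: t => //= t IH; rewrite /blen in IH *.
by rewrite (order_id_cycle (cycle_orbit Hinj _)) IH.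
Qed.

Lemma blen_gt0 x : 0 < blen M x.
Proof. exact: order_gt0. Qed.

Lemma iter_mod x u : iter u (dnext M) x = iter (u %% blen M x) (dnext M) x.
Proof.
rewrite {1}(divn_eq u (blen M x)); elim: (u %/ blen M x) => [|q IH]; first by rewrite mul0n.
by rewrite mulSn -addnA addnC iterD iter_order.
Qed.

Lemma lab_mod x u : lab x u = lab x (u %% blen M x).
Proof. by rewrite /lab -iter_mod. Qed.

Lemma fconnect_iterP x y : fconnect (dnext M) x y ->
  exists2 t, t < blen M x & y = iter t (dnext M) x.
Proof.
move=> H; exists (findex (dnext M) x y); first exact: findex_max.
by rewrite iter_findex.
Qed.

Lemma nth_lab_traject (x0 : letter n) x k u : u < k ->
  nth x0 (map (dlab M) (traject (dnext M) x k)) u = lab x u.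
Proof.
by move=> Hu; rewrite (nth_map x) ?size_traject // nth_traject.
Qed.

Lemma size_bword x : size (bword M x) = blen M x.
Proof. by rewrite size_map size_traject. Qed.

Lemma rot_lab (x0 : letter n) x j r : rot j (bword M x) = r ->
  exists2 o, o < blen M x & forall u, lab x (o + u) = nth x0 r (u %% blen M x).
Proof.
move=> Hr; set N := blen M x.
have N0 : 0 < N := blen_gt0 x.
have [j' [Hj' Hrj]] : exists j', j' < N /\ rot j' (bword M x) = r.
  case: (ltnP j N) => H; first by exists j.
  by exists 0; split => //; rewrite rot0 -Hr rot_oversize // size_bword.
exists j' => // u.
have Hu : u %% N < N by rewrite ltn_pmod.
have Hj'' : j' <= size (bword M x) by rewrite size_bword ltnW.
have Hu' : u %% N < size (bword M x) by rewrite size_bword.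
rewrite -Hrj (nth_rot_mod x0 Hj'' Hu') size_bword -/N.
have Hm : (u %% N + j') %% N < N by rewrite ltn_pmod.
rewrite /bword (nth_lab_traject x0 _ Hm).
rewrite lab_mod [in RHS]lab_mod -/N.
by rewrite modn_mod modnDml addnC.
Qed.

Definition cw (b : bool) m (w : word n) : word n :=
  if b then winv (block n m) ++ w else block n m ++ winv w.

Lemma size_cw b m w : size (cw b m w) = n * m + size w.
Proof. by case: b; rewrite /cw size_cat size_winv size_block // addnC. Qed.

Variable C : nat -> option (word n * nat).
Hypothesis Hdiag : forall d, dface M d ->
  exists r j, (Rall C r \/ Rall C (winv r)) /\ rot j (bword M d) = r.

Lemma FACE (x0 : letter n) x : dface M x -> exists j w m b o,
  [/\ C j = Some (w, m), o < blen M x, blen M x = n * m + size w &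
      forall u, lab x (o + u) = nth x0 (cw b m w) (u %% blen M x)].
Proof.
move=> Hx; have [r [j0 [HR Hrot]]] := Hdiag Hx.
have [o Ho Hl] := rot_lab x0 Hrot.
have Hs : size r = blen M x by rewrite -Hrot size_rot size_bword.
set N := blen M x in Ho Hl Hs *.
case: HR => [[j [w [m [HC Er]]]] | [j [w [m [HC Er]]]]].
  exists j, w, m, false, o; split => //.
    by rewrite -Hs Er size_cat size_block size_winv.
  by move=> u; rewrite Hl Er.
have Er' : r = w ++ winv (block n m) by rewrite -[r]winvK Er /relator winv_cat winvK.
have HK : size w <= N by rewrite -Hs Er' size_cat leq_addr.
have N0 : 0 < N := blen_gt0 x.
exists j, w, m, true, ((o + size w) %% N); split.
- by [].
- by rewrite ltn_pmod.
- by rewrite -Hs Er' size_cat size_winv size_block addnC.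
move=> u.
have -> : cw true m w = rot (size w) r by rewrite Er' rot_size_cat.
rewrite nth_rot_mod ?Hs ?ltn_pmod // -Hl lab_mod [in RHS]lab_mod -/N.
rewrite modnDml [in RHS]addnCA [in RHS]modnDml.
by rewrite [in RHS]addnC.
Qed.

Definition phi (y : letter n) : letter n := (rev_ord y.1, ~~ y.2).

Lemma K_lt_m' m K m' : 3 <= n -> 4 * n * K <= n * m + K ->
  n * (n * m + K) < (2 * n - 2) * (n * m') -> K < m'.
Proof.
move=> n3 HK H.
have n0 : 0 < n by lia.
have H2 : n * m + K < (2 * n - 2) * m'.
  by rewrite -(ltn_pmul2l n0) mulnCA.
rewrite ltnNge; apply/negP => Hm.
have A : (2 * n - 2) * m' <= (2 * n - 2) * K by rewrite leq_mul2l Hm orbT.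
have B : (2 * n - 2) * K <= 4 * n * K by rewrite leq_mul2r; apply/orP; right; lia.
by move: H2; rewrite ltnNge (leq_trans A (leq_trans B HK)).
Qed.

Lemma UNIQ (x0 : letter n) x w m b o t k m' b' :
  3 <= n -> 0 < m -> 4 * n * size w <= n * m + size w ->
  blen M x = n * m + size w -> o < blen M x ->
  (forall u, lab x (o + u) = nth x0 (cw b m w) (u %% blen M x)) ->
  n * blen M x < (2 * n - 2) * k ->
  map (dlab M) (traject (dnext M) (iter t (dnext M) x) k) =
     (if b' then winv (block n m') else block n m') ->
  [/\ b' = b, m' = m, k = n * m & t %% blen M x = o].
Proof.
move=> n3 m0 HK HN Ho Hl Hk Hocc.
set N := blen M x in HN Ho Hl Hk *.
have Ek : k = n * m'.
  have := congr1 size Hocc; rewrite size_map size_traject => ->.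
  by case: (b'); rewrite ?size_winv size_block.
rewrite Ek in Hk.
have Km' : size w < m' by apply: (K_lt_m' n3 HK); rewrite -HN.
have m'0 : 0 < m' by lia.
have Hocc' : forall u, u < n * m' ->
    lab x (t + u) = nth x0 (if b' then winv (block n m') else block n m') u.
  by move=> u Hu; rewrite -labD -(nth_lab_traject x0 _ (_ : u < k)) ?Hocc // Ek.
pose psi y := if b then phi y else y.
pose c u := psi (lab x (o + u)).
have cper : forall u, c (u + (n * m + size w)) = c u.
  move=> u; rewrite /c -HN; congr psi.
  by rewrite lab_mod [in RHS]lab_mod -/N addnA modnDr.
have cblk : forall u, u < n * m -> (c u).1 = u %/ m :> nat /\ (c u).2 = false.
  move=> u Hu; rewrite /c /psi Hl modn_small; last by rewrite HN; lia.
  case: (b); rewrite /cw nth_cat ?size_winv size_block Hu.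
    have [H1 H2] := nth_winv_block x0 Hu.
    rewrite /phi /= H1 H2; split => //.
    have : u %/ m < n by rewrite ltn_divLR.
    set q := u %/ m; lia.
  exact: nth_block.
have Eo : forall u, c (t + N - o + u) = psi (lab x (t + u)).
  move=> u; rewrite /c; congr psi.
  rewrite lab_mod [in RHS]lab_mod -/N; congr lab.
  have -> : o + (t + N - o + u) = (t + u) + N by lia.
  by rewrite modnDr.
case Ebb : (b' == b).
  move/eqP: Ebb => Ebb; subst b'.
  have Hc : forall u, u < n * m' -> (c (t + N - o + u)).1 = u %/ m' :> nat /\
      (c (t + N - o + u)).2 = false.
    move=> u Hu; rewrite Eo Hocc' // /psi.
    case: (b) => //; last exact: nth_block.
    have [H1 H2] := nth_winv_block x0 Hu.
    rewrite /phi /= H1 H2; split => //.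
    have : u %/ m' < n by rewrite ltn_divLR.
    set q := u %/ m'; lia.
  have Hm2 : 2 * m' < n * m' by rewrite ltn_mul2r m'0; lia.
  have := @coreA n m (size w) c m0 n3 cper cblk (t + N - o + m'.-1) m' 1
    isT ltac:(lia) Km'.
  have Ht1 : (c (t + N - o + m'.-1)).1 != 1 :> nat.
    have [-> _] := Hc m'.-1 ltac:(lia).
    by rewrite divn_small //; lia.
  have Ht2 : (c ((t + N - o + m'.-1).+1 + m')).1 != 1 :> nat.
    have -> : (t + N - o + m'.-1).+1 + m' = t + N - o + 2 * m' by lia.
    have [-> _] := Hc (2 * m') Hm2.
    by rewrite mulnK.
  move=> /(_ Ht1 Ht2) [].
    move=> v Hv.
    have -> : (t + N - o + m'.-1).+1 + v = t + N - o + (m' + v) by lia.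
    have Hv' : m' + v < n * m' by lia.
    have [-> ->] := Hc _ Hv'; split => //.
    by rewrite -[X in X + _]mul1n divnMDl // divn_small // addn0.
  move=> Em; subst m'.
  rewrite -HN -/N => Emod.
  have HNm : m < N by rewrite HN; lia.
  split => //.
  have HN0 : 0 < N by clear -HNm; lia.
  have E1 : ((t + N - o) %% N + m) %% N = m.
    rewrite modnDml -[RHS]mul1n -Emod.
    by have -> : (t + N - o + m.-1).+1 = t + N - o + m by clear -m0; lia.
  have Hz := ltn_pmod (t + N - o) HN0.
  move: E1 Hz; set z := (t + N - o) %% N => E1 Hz.
  have Ez : z = 0.
    move: E1; rewrite mod_lt2; last by clear -Hz HNm; lia.
    by case: ifP; clear -Hz HNm; lia.
  move: Ez; rewrite /z.
  have -> : t + N - o = (t %% N + (N - o)) + (t %/ N) * N.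
    rewrite {1}(divn_eq t N); move: Ho; set q := t %/ N * N; set r := t %% N.
    by clear; lia.
  rewrite [_ + t %/ N * N]addnC modnMDl.
  have Hr := ltn_pmod t HN0.
  move: Hr; set r := t %% N => Hr.
  rewrite mod_lt2; last by clear -Hr Ho; lia.
  by case: ifP; clear -Hr Ho; lia.
exfalso.
apply: (@coreB n m (size w) c m0 n3 cper cblk (t + N - o) m' Km').
have Hmm : m' <= n * m' by apply: leq_pmull; clear -n3; lia.
move=> v Hv.
have Hv' : v < n * m' by clear -Hmm Hv; lia.
rewrite Eo Hocc' //.
rewrite /psi; move: Ebb; case: (b); case: (b') => // _.
  by rewrite /phi /=; have [_ ->] := nth_block x0 Hv'.
by have [_ ->] := nth_winv_block x0 Hv'.
Qed.

Hypothesis n3 : 3 <= n.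
Hypothesis HCp : forall j w m, C j = Some (w, m) ->
  0 < m /\ 4 * n * size w <= n * m + size w.
Hypothesis Hface : forall d, dface M (dnext M d) = dface M d.

Lemma dface_iter x t : dface M (iter t (dnext M) x) = dface M x.
Proof. by elim: t => //= t IH; rewrite Hface. Qed.

Definition blk (b : bool) m : word n := if b then winv (block n m) else block n m.

Lemma sb_to_b x k : special_block M x k -> exists b m',
  n * blen M x < (2 * n - 2) * k /\ map (dlab M) (traject (dnext M) x k) = blk b m'.
Proof.
case=> _ [H [m' [E|E]]]; first by exists false, m'.
by exists true, m'.
Qed.

Lemma FN (x0 : letter n) x k : dface M x -> special_block M x k -> exists j w m b,
  [/\ C j = Some (w, m), k = n * m, blen M x = n * m + size w,
      map (dlab M) (traject (dnext M) x k) = blk b m &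
      forall u, lab x u = nth x0 (cw b m w) (u %% blen M x)].
Proof.
move=> Hx Hsb; have [b [m' [Hk Hl]]] := sb_to_b Hsb.
have [j [w [m [b0 [o [HC Ho HN Hlo]]]]]] := FACE x0 Hx.
have [m0 HK] := HCp HC.
have := @UNIQ x0 x w m b0 o 0 k m' b n3 m0 HK HN Ho Hlo Hk.
case/(_ Hl) => Eb Em Ek; rewrite mod0n => Eo; subst b0 m' o.
exists j, w, m, b; split => //.
Qed.

Lemma nth_cw_blk (x0 : letter n) b m w y : y < n * m ->
  nth x0 (cw b m w) y = nth x0 (blk b m) y.
Proof.
by move=> Hy; case: b; rewrite /cw /blk nth_cat ?size_winv size_block Hy.
Qed.

Lemma blk_sign (x0 : letter n) b m y : y < n * m -> (nth x0 (blk b m) y).2 = b.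
Proof.
move=> Hy; case: b; rewrite /blk.
  by have [_ ->] := nth_winv_block x0 Hy.
by have [_ ->] := nth_block x0 Hy.
Qed.

Lemma rot_winv_cw b m w : rot (size w) (winv (cw b m w)) = cw (~~ b) m w.
Proof.
case: b; rewrite /cw winv_cat ?winvK /=.
  by rewrite -(size_winv w) rot_size_cat.
by rewrite rot_size_cat.
Qed.

Lemma iter_psi x j : iter j (fun y => drev M (finv (dnext M) (drev M y))) x =
  drev M (iter j (finv (dnext M)) (drev M x)).
Proof.
elim: j => /= [|j ->]; first by rewrite Hrev.
by rewrite Hrev.
Qed.

Lemma blen_fconnect x y : fconnect (dnext M) x y -> blen M y = blen M x.
Proof. by case/fconnect_iterP => t _ ->; rewrite blen_iter. Qed.

End Diag.


Local Open Scope ring_scope.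

Lemma Cbranch (R : realType) n (lam1 : R) (e : nat -> word n) (C : nat -> option (word n * nat)) j w m :
  construction lam1 e C -> C j = Some (w, m) ->
  [/\ (0 < j)%N, (0 < m)%N, (size w)%:R <= lam1 * (n * m + size w)%N%:R &
    forall j' w' m', (j' < j)%N -> C j' = Some (w', m') ->
      m != m' /\ (n * m' + size w' <= n * m + size w)%N].
Proof.
case=> C0 HC Hj.
have j0 : (0 < j)%N by case: j Hj => //; rewrite C0.
have [H1 H2] := HC j j0.
case: (classic (forall u : word n, eq_regular (Rprefix C j) u)) => H.
  by rewrite H1 in Hj.
have [w' [m' [E [_ [Hm [Hd Hl]]]]]] := H2 H.
rewrite Hj in E; case: E => Ew Em; subst w' m'.
by split.
Qed.

Lemma Cineq (R : realType) n (lam1 : R) K S :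
  (0 < n)%N -> 0 < lam1 -> lam1 < 1 ->
  (4 + 2 * n%:R * lam1 / (1 - lam1)) * lam1 <= 1 / n%:R ->
  K%:R <= lam1 * S%:R -> (4 * n * K <= S)%N.
Proof.
move=> n0 l0 l1 H HK.
have nR : 0 < n%:R :> R by rewrite ltr0n.
have t0 : 0 <= 2 * n%:R * lam1 / (1 - lam1).
  apply: divr_ge0; last lra.
  apply: mulr_ge0; last lra.
  apply: mulr_ge0; lra.
have H4 : 4 * lam1 <= 1 / n%:R.
  apply: le_trans H; rewrite ler_wpM2r //; [lra | lra].
have H4' : 4 * n%:R * lam1 <= 1.
  have := ler_wpM2l (ltW nR) H4.
  have -> : n%:R * (1 / n%:R) = 1 :> R by rewrite mul1r divff // gt_eqF.
  by rewrite mulrA [n%:R * 4]mulrC.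
rewrite -(ler_nat R) !natrM.
have S0 : 0 <= S%:R :> R by [].
have K0 : 0 <= K%:R :> R by [].
have : 4 * n%:R * K%:R <= 4 * n%:R * (lam1 * S%:R) :> R.
  by apply: ler_wpM2l => //; apply: mulr_ge0 => //; lra.
have : 4 * n%:R * lam1 * S%:R <= S%:R :> R.
  by have := ler_wpM2r S0 H4'; rewrite mul1r.
rewrite -!mulrA => A B; apply: le_trans B _; rewrite !mulrA in A *.
by [].
Qed.

Local Close Scope ring_scope.
Lemma sb_ineq n m K : (3 <= n)%N -> (0 < m)%N -> (4 * n * K <= n * m + K)%N ->
  (n * (n * m + K) < (2 * n - 2) * (n * m))%N.
Proof. move=> *; nia. Qed.

Section Main.
Variables (n : nat) (M : dmap n) (C : nat -> option (word n * nat)) (x0 : letter n).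
Hypothesis Hrev : involutive (drev M).
Hypothesis Hinj : injective (dnext M).
Hypothesis Hlab : forall d, dlab M (drev M d) = linv (dlab M d).
Hypothesis Hdiag : forall d, dface M d ->
  exists r j, (Rall C r \/ Rall C (winv r)) /\ rot j (bword M d) = r.
Hypothesis n3 : (3 <= n)%N.
Hypothesis HCp : forall j w m, C j = Some (w, m) ->
  (0 < m)%N /\ (4 * n * size w <= n * m + size w)%N.
Hypothesis Hface : forall d, dface M (dnext M d) = dface M d.
Hypothesis HCinj : forall j1 j2 w1 w2 m, C j1 = Some (w1, m) -> C j2 = Some (w2, m) -> j1 = j2.
Hypothesis Hwr : weakly_reduced M.

Lemma canon d : dface M d -> exists j w m, [/\ C j = Some (w, m),
  blen M d = (n * m + size w)%N & exists p, [/\ selected M p, bsub M d p & size p = (n * m)%N]].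
Proof.
move=> Hd.
have [j [w [m [b [o [HC Ho HN Hlo]]]]]] := FACE Hinj Hdiag x0 Hd.
have [m0 HK] := HCp HC.
exists j, w, m; split => //.
set d' := iter o (dnext M) d.
have Hbl : blen M d' = blen M d by rewrite (blen_iter Hinj).
have Hk : (n * m <= blen M d)%N by rewrite HN leq_addr.
have Hlab' : map (dlab M) (traject (dnext M) d' (n * m)) = blk n b m.
  apply: (@eq_from_nth _ x0).
    by rewrite size_map size_traject /blk; case: (b); rewrite ?size_winv size_block.
  move=> u; rewrite size_map size_traject => Hu.
  rewrite nth_lab_traject // labD Hlo modn_small; last by rewrite HN; lia.
  exact: nth_cw_blk.
exists (traject (dnext M) d' (n * m)); split.
- exists d', (n * m)%N, 0%N, (n * m)%N.
  split; first by rewrite (dface_iter Hface).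
  split.
    rewrite /special_block Hbl; split => //; split; first by rewrite HN; exact: sb_ineq.
    by exists m; move: Hlab'; rewrite /blk; case: (b) => ->; [right | left].
  split; first by rewrite muln_gt0 m0 andbT (leq_trans _ n3).
  by [].
- exists d', (n * m)%N; split => //.
    exact: fconnect_iter.
  by rewrite Hk muln_gt0 m0 andbT (leq_trans _ n3).
- by rewrite size_traject.
Qed.

Lemma maxsel d p : max_selected M d p -> exists t k,
  [/\ dface M (iter t (dnext M) d), special_block M (iter t (dnext M) d) k &
      p = traject (dnext M) (iter t (dnext M) d) k].
Proof.
case=> [[d1 [k1 [a [l [Hd1 [Hsb [Hl [Hal Ep]]]]]]]] [Hbs Hmax]].
have [e [l' [He [Hl' Ep']]]] := Hbs.
have Ehead : e = iter a (dnext M) d1.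
  move: Ep'; rewrite Ep; case: l Hl {Ep Hal} => // l _; case: l' Hl' => // l' _.
  by rewrite !trajectS => -[->].
have Hdd1 : fconnect (dnext M) d d1.
  apply: (connect_trans (_ : fconnect (dnext M) d e) _) => //.
  rewrite Ehead (fconnect_sym Hinj); exact: fconnect_iter.
have [t Ht Et] := fconnect_iterP Hdd1.
have [_ [Hk1 _]] := Hsb.
have k10 : (0 < k1)%N by move: Hk1; case: (k1) => //; rewrite muln0.
have Hq : selected M (traject (dnext M) d1 k1).
  by exists d1, k1, 0%N, k1; do 3!(split => //).
have Hbq : bsub M d (traject (dnext M) d1 k1).
  exists d1, k1; split => //; rewrite k10 /=.
  by rewrite -(blen_fconnect Hinj Hdd1); case: Hsb.
have Hinf : infix p (traject (dnext M) d1 k1).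
  rewrite Ep.
  have -> : k1 = (a + (l + (k1 - (a + l))))%N by rewrite addnA subnKC.
  rewrite trajectD trajectD; exact: infix_infix.
exists t, k1; rewrite -Et; split => //.
exact: Hmax.
Qed.

Lemma B0b d p q : max_selected M d p -> max_selected M d q -> p = q.
Proof.
move=> /maxsel [t1 [k1 [Hf1 Hs1 E1]]] /maxsel [t2 [k2 [Hf2 Hs2 E2]]].
have Hd : dface M d by rewrite -(dface_iter Hface d t1).
have [j [w [m [b [o [HC Ho HN Hlo]]]]]] := FACE Hinj Hdiag x0 Hd.
have [m0 HK] := HCp HC.
have [b1 [m1 [Hk1 Hl1]]] := sb_to_b Hs1.
have [b2 [m2 [Hk2 Hl2]]] := sb_to_b Hs2.
rewrite (blen_iter Hinj) in Hk1; rewrite (blen_iter Hinj) in Hk2.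
have [_ _ Ek1 Et1] := UNIQ Hinj n3 m0 HK HN Ho Hlo Hk1 Hl1.
have [_ _ Ek2 Et2] := UNIQ Hinj n3 m0 HK HN Ho Hlo Hk2 Hl2.
rewrite E1 E2 Ek1 Ek2 (iter_mod Hinj d t1) (iter_mod Hinj d t2) Et1 Et2.
by [].
Qed.

Lemma bsub_head d x l : bsub M d (traject (dnext M) x l) -> (0 < l)%N ->
  fconnect (dnext M) d x.
Proof.
case=> [e [l' [He [Hl' Ep]]]] Hl.
suff -> : x = e by [].
move: Ep; case: l Hl => // l _; case: l' Hl' => // l' _.
by rewrite !trajectS => -[].
Qed.

Lemma idx_rev m y : (y < n * m)%N -> (n.-1 - y %/ m = (n * m - y.+1) %/ m)%N.
Proof. by move=> Hy; rewrite div_rev. Qed.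

Lemma B2core d p : selected M p -> selected M (pinv M p) -> bsub M d p ->
  p != [::] -> (n * size p <= 2 * blen M d)%N.
Proof.
move=> [d1 [k1 [a1 [l [Hd1 [Hsb1 [Hl [Hal1 Ep]]]]]]]].
move=> [d2 [k2 [a2 [l2 [Hd2 [Hsb2 [Hl2 [Hal2 Ep2]]]]]]]] Hbs Hp.
have El : l2 = l.
  by have := congr1 size Ep2; rewrite /pinv size_rev size_map Ep !size_traject.
subst l2.
have [j1 [w1 [m1 [b1 [HC1 Ek1 HN1 Hlab1 Hlo1]]]]] := FN Hinj Hdiag n3 HCp x0 Hd1 Hsb1.
have [j2 [w2 [m2 [b2 [HC2 Ek2 HN2 Hlab2 Hlo2]]]]] := FN Hinj Hdiag n3 HCp x0 Hd2 Hsb2.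
have [m10 HK1] := HCp HC1.
have [m20 HK2] := HCp HC2.
have Hdd : fconnect (dnext M) d (iter a1 (dnext M) d1).
  by apply: bsub_head Hl; rewrite -Ep.
have Hbd : blen M d = blen M d1.
  by rewrite -(blen_fconnect Hinj Hdd) (blen_iter Hinj).
rewrite Hbd HN1 Ep size_traject.
case: (leqP l (2 * m1)) => Hl2m.
  have : (n * l <= n * (2 * m1))%N by rewrite leq_mul2l Hl2m orbT.
  move=> H; apply: (leq_trans H); by rewrite mulnCA leq_mul2l leq_addr orbT.
exfalso.
have Hrel : forall v, (v < l)%N ->
    iter (a2 + v) (dnext M) d2 = drev M (iter (a1 + (l - v.+1)) (dnext M) d1).
  move=> v Hv.
  have : nth d2 (pinv M p) v = nth d2 (traject (dnext M) (iter a2 (dnext M) d2) l) v.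
    by rewrite Ep2.
  rewrite [nth _ (traject _ _ _) _](set_nth_default (iter a2 (dnext M) d2)) ?size_traject //.
  rewrite nth_traject // -iterD addnC => <-.
  rewrite /pinv nth_rev size_map Ep ?size_traject //.
  rewrite (nth_map d1) ?size_traject; last by clear -Hv; lia.
  rewrite [nth _ (traject _ _ _) _](set_nth_default (iter a1 (dnext M) d1)) ?size_traject; last by clear -Hv; lia.
  rewrite nth_traject; last by clear -Hv; lia.
  by rewrite -iterD addnC.
have Hrl : forall v, (v < l)%N ->
    lab d2 (a2 + v) = linv (lab d1 (a1 + (l - v.+1))).
  by move=> v Hv; rewrite /lab Hrel // Hlab.
have Hf1 : forall u, (u < l)%N -> lab d1 (a1 + u) = nth x0 (blk n b1 m1) (a1 + u).
  move=> u Hu; rewrite Hlo1 modn_small; last by rewrite HN1; clear -Hu Hal1 Ek1; lia.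
  by apply: nth_cw_blk; clear -Hu Hal1 Ek1; lia.
have Hf2 : forall u, (u < l)%N -> lab d2 (a2 + u) = nth x0 (blk n b2 m2) (a2 + u).
  move=> u Hu; rewrite Hlo2 modn_small; last by rewrite HN2; clear -Hu Hal2 Ek2; lia.
  by apply: nth_cw_blk; clear -Hu Hal2 Ek2; lia.
have l0 : (0 < l)%N by [].
have Eb2 : b2 = ~~ b1.
  have H1 := Hrl l.-1 ltac:(clear -l0; lia).
  rewrite Hf2 in H1; last by clear -l0; lia.
  have E0 : (a1 + (l - l.-1.+1) = a1 + 0)%N by clear -l0; lia.
  rewrite E0 Hf1 // in H1.
  have S1 : (a2 + l.-1 < n * m2)%N by clear -l0 Hal2 Ek2; lia.
  have S2 : (a1 + 0 < n * m1)%N by clear -l0 Hal1 Ek1; lia.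
  have := congr1 snd H1; rewrite /linv /=.
  by rewrite (blk_sign _ _ S1) (blk_sign _ _ S2).
have [Em Ea] : m1 = m2 /\ (a1 + a2 + l = n * m1)%N.
  case Eb1 : b1 Hf1 Hf2 Eb2 Hlo1 => Hf1 Hf2 /= Eb2 Hlo1; subst b2.
  - have H : forall v, (v < l)%N -> ((n * m1 - a1 - l + v) %/ m1 = (a2 + v) %/ m2)%N.
      move=> v Hv.
      have Ha : (a1 + (l - v.+1) < n * m1)%N by clear -Hv Hal1 Ek1; lia.
      have Hb : (a2 + v < n * m2)%N by clear -Hv Hal2 Ek2; lia.
      have := congr1 (fun x => nat_of_ord x.1) (Hrl v Hv).
      rewrite Hf2 // /linv /= Hf1; last by clear -Hv; lia.
      rewrite /blk.
      have [-> _] := nth_block x0 Hb.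
      have [-> _] := nth_winv_block x0 Ha.
      rewrite idx_rev // => ->; congr (_ %/ _).
      by clear -Hv Hal1 Ek1; lia.
    have [Em Ea] := align m10 m20 Hl2m H.
    by split => //; clear -Ea Hal1 Ek1; lia.
  - have H : forall u, (u < l)%N -> ((a1 + u) %/ m1 = (n * m2 - a2 - l + u) %/ m2)%N.
      move=> u Hu.
      have Ha : (a1 + u < n * m1)%N by clear -Hu Hal1 Ek1; lia.
      have Hb : (a2 + (l - u.+1) < n * m2)%N by clear -Hu Hal2 Ek2; lia.
      have := congr1 (fun x => nat_of_ord x.1) (Hrl (l - u.+1) ltac:(clear -Hu; lia)).
      have E : (a1 + (l - (l - u.+1).+1) = a1 + u)%N by clear -Hu; lia.
      rewrite E Hf1 // Hf2; last by clear -Hu; lia.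
      rewrite /linv /= /blk.
      have [-> _] := nth_block x0 Ha.
      have [-> _] := nth_winv_block x0 Hb.
      rewrite idx_rev // => <-; congr (_ %/ _).
      by clear -Hu Hal2 Ek2; lia.
    have [Em Ea] := align m10 m20 Hl2m H.
    by split => //; clear -Ea Hal2 Ek2 Em; subst; lia.
subst m2.
have Ej := HCinj HC1 HC2; subst j2.
move: HC2; rewrite HC1 => -[Ew]; subst w2.
have HNN : blen M d2 = blen M d1 by rewrite HN1 HN2.
set N := blen M d1 in HN1 HNN Hlo1 Hbd *.
have N0 : (0 < N)%N := blen_gt0 d1.
set d0 := iter a1 (dnext M) d1.
have Hd0r : drev M d0 = iter (a2 + l.-1) (dnext M) d2.
  rewrite Hrel; last by clear -l0; lia.
  have E : (a1 + (l - l.-1.+1) = a1)%N by clear -l0; lia.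
  by rewrite E.
apply: Hwr; exists d0; split.
- by rewrite /d0 (dface_iter Hface).
- by rewrite Hd0r (dface_iter Hface).
- apply/negP => Hc.
  have Hc' : fconnect (dnext M) d1 d2.
    apply: (connect_trans (_ : fconnect (dnext M) d1 d0)); first exact: fconnect_iter.
    apply: (connect_trans Hc); rewrite Hd0r (fconnect_sym Hinj).
    exact: fconnect_iter.
  have [t _ Et] := fconnect_iterP Hc'.
  have [_ [Hk2 _]] := Hsb2.
  rewrite Et (blen_iter Hinj) -/N in Hk2.
  rewrite Et in Hlab2.
  have Hlo1' : forall u, lab d1 (0 + u) = nth x0 (cw b1 m1 w1) (u %% N) by [].
  have := UNIQ Hinj n3 m10 HK1 HN1 N0 Hlo1' Hk2 Hlab2.
  by case=> Eb _ _ _; move: Eb2; rewrite Eb; case: (b1).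
- by rewrite Hd0r !(blen_iter Hinj) HNN.
move=> j Hj.
have Hj' : (j <= N)%N by move: Hj; rewrite /d0 (blen_iter Hinj) -/N; clear; lia.
have HoE : fingraph.order (dnext M) (drev M d0) = N.
  by rewrite -/(blen M (drev M d0)) Hd0r (blen_iter Hinj) HNN.
rewrite (iter_psi Hrev) Hlab (iter_finv Hinj) HoE //.
have L1 : dlab M (iter j (dnext M) d0) = lab d1 (a1 + j) by rewrite -labD.
have L2 : dlab M (iter (N - j) (dnext M) (drev M d0)) = lab d2 (a2 + l.-1 + (N - j)).
  by rewrite -labD -Hd0r.
rewrite L1 L2 Hlo1 Hlo2 HNN Eb2 -rot_winv_cw.
have Hs1 : size (cw b1 m1 w1) = N by rewrite size_cw HN1.
have H1 : (size w1 <= size (cw b1 m1 w1))%N by rewrite Hs1 HN1 leq_addl.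
have H2 : (a1 + j < size (cw b1 m1 w1) + size (cw b1 m1 w1))%N.
  rewrite Hs1; move: Hj; rewrite /d0 (blen_iter Hinj) -/N => Hj.
  by clear -Hj Hal1 Ek1 HN1; lia.
have H3 : (a2 + l.-1 + (N - j) + size w1 + (a1 + j) + 1 =
           size (cw b1 m1 w1) + size (cw b1 m1 w1))%N.
  by rewrite Hs1; clear -Ea Hj' HN1 l0; lia.
have := CI x0 H1 H2 H3; rewrite Hs1 => ->.
by rewrite linvK.
Qed.

End Main.
Local Open Scope ring_scope.

Local Open Scope ring_scope.

Lemma pinvK n (M : dmap n) : involutive (drev M) -> involutive (pinv M).
Proof.
move=> Hrev p; rewrite /pinv map_rev revK -map_comp map_id_in // => x _ /=.
exact: Hrev.
Qed.

Lemma nat_to_real (R : realType) n s B : (0 < n)%N -> (n * s <= 2 * B)%N ->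
  s%:R <= 2 / n%:R * B%:R :> R.
Proof.
move=> n0 H.
have nR : 0 < n%:R :> R by rewrite ltr0n.
rewrite mulrAC ler_pdivlMr // -natrM.
have -> : 2 * B%:R = (2 * B)%N%:R :> R by rewrite natrM.
by rewrite ler_nat mulnC.
Qed.

Unset Implicit Arguments.
Theorem proposition5p1 (R : realType) (n : nat) (lam1 : R)
    (e : nat -> word n) (C : nat -> option (word n * nat)) :
  (63 <= n)%N ->
  0 < lam1 -> lam1 < 1 ->
  (4 + 2 * n%:R * lam1 / (1 - lam1)) * lam1 <= 1 / n%:R ->
  word_order_enum e ->
  construction lam1 e C ->
  forall M : dmap n, is_diagram (Rall C) M -> weakly_reduced M ->
    condB M lam1 (2 / n%:R).
Proof.
move=> n63 l0 l1 Hlam He Hcons M [[Hrev [_ [Hinj [Hface _]]]] [Hlab Hdiag]] Hwr.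
have n3 : (3 <= n)%N by apply: leq_trans n63.
have n0 : (0 < n)%N by apply: leq_trans n63.
have HCp : forall j w m, C j = Some (w, m) ->
    (0 < m)%N /\ (4 * n * size w <= n * m + size w)%N.
  move=> j w m HC; have [_ m0 Hl _] := Cbranch Hcons HC.
  by split => //; apply: (Cineq n0 l0 l1 Hlam Hl).
have HCinj : forall j1 j2 w1 w2 m, C j1 = Some (w1, m) -> C j2 = Some (w2, m) -> j1 = j2.
  move=> j1 j2 w1 w2 m H1 H2.
  case: (ltngtP j1 j2) => // Hj.
    have [_ _ _ Hd] := Cbranch Hcons H2.
    by have [/eqP] := Hd _ _ _ Hj H1.
  have [_ _ _ Hd] := Cbranch Hcons H1.
  by have [/eqP] := Hd _ _ _ Hj H2.
pose x0 : letter n := (Ordinal n0, false).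
move=> d Hd.
split; [split | split].
- have [j [w [m [HC HN [p [Hp Hbp Hsp]]]]]] := canon x0 Hinj Hdiag n3 HCp Hface Hd.
  by exists p.
- by move=> p q; apply: (B0b x0 Hinj Hdiag n3 HCp Hface).
- have [j [w [m [HC HN [p [Hp Hbp Hsp]]]]]] := canon x0 Hinj Hdiag n3 HCp Hface Hd.
  exists p; split => //; split => //.
  have [_ _ Hl _] := Cbranch Hcons HC.
  rewrite HN Hsp natrD in Hl *.
  rewrite mulrBl mul1r.
  lra.
- move=> p Harc Hs Hsi Hb.
  have Hp : p != [::] by move: Harc; case: (p).
  case: Hb => Hb.
    by apply: nat_to_real => //; apply: (B2core x0 Hrev Hinj Hlab Hdiag n3 HCp Hface HCinj Hwr).
  have Hp' : pinv M p != [::] by rewrite /pinv -size_eq0 size_rev size_map size_eq0.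
  have := B2core x0 Hrev Hinj Hlab Hdiag n3 HCp Hface HCinj Hwr Hsi _ Hb Hp'.
  rewrite (@pinvK _ _ Hrev) => /(_ Hs).
  rewrite /pinv size_rev size_map => H.
  exact: nat_to_real.
Qed.
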